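(* Let $d\ge1$, $\emptyset\ne H\subset\mathbb{R}^d$, $r>0$, and let $\tilde x,\tilde y\in\mathbb{R}^d$ with $d(\tilde x,H)\ge r$ and $d(\tilde y,H)\ge r$. Let $\tilde f(s):=d(T_s\tilde x,T_s\tilde y)$ for $s\ge0$. Then $\tilde f$ is (right-)differentiable at $0$ and $$-\dot{\tilde f}(0)\le\frac{\tilde f(0)}{r}.$$
   Context: $d(\cdot,\cdot)$ is Euclidean distance and $d(x,H)=\inf_{y\in H}|x-y|$. Let $\bar H$ be the closure of $H$; for each $x$ let $\pi(x)\in\bar H$ be a point with $|x-\pi(x)|=d(x,H)$ (any one if several). For $s\ge0$, $T_s x:=x+s\frac{\pi(x)-x}{|\pi(x)-x|}$ if $d(x,H)>s$ and $T_s x:=\pi(x)$ if $d(x,H)\le s$. The derivative at $0$ is one-sided since $\tilde f$ is defined on $[0,\infty)$. *)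

(* Defs.v *)
From HB Require Import structures.
From mathcomp Require Import all_boot all_order all_algebra.
From mathcomp Require Import all_classical all_reals all_analysis.
Set Implicit Arguments. Unset Strict Implicit. Unset Printing Implicit Defensive.
Import Order.TTheory GRing.Theory Num.Theory.
Import numFieldNormedType.Exports.
Local Open Scope classical_set_scope.
Local Open Scope ring_scope.

Definition eucl_dist (R : realType) (d : nat) (x y : 'rV[R]_d) : R :=
  Num.sqrt (\sum_(i < d) (x ord0 i - y ord0 i) ^+ 2).

Definition distH (R : realType) (d : nat) (x : 'rV[R]_d) (H : set 'rV[R]_d) : R :=
  inf [set eucl_dist x y | y in H].

Definition eclosure (R : realType) (d : nat) (H : set 'rV[R]_d) : set 'rV[R]_d :=
  [set z | forall e : R, 0 < e -> exists2 y, H y & eucl_dist z y < e].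

Definition is_proj (R : realType) (d : nat) (H : set 'rV[R]_d)
  (pi : 'rV[R]_d -> 'rV[R]_d) : Prop :=
  forall x, eclosure H (pi x) /\ eucl_dist x (pi x) = distH x H.

Definition Ts (R : realType) (d : nat) (H : set 'rV[R]_d)
  (pi : 'rV[R]_d -> 'rV[R]_d) (s : R) (x : 'rV[R]_d) : 'rV[R]_d :=
  if s < distH x H then x + (s / eucl_dist (pi x) x) *: (pi x - x) else pi x.

(* Main.v *)
Require Import Defs.
From HB Require Import structures.
From mathcomp Require Import all_boot all_order all_algebra.
From mathcomp Require Import all_classical all_reals all_analysis.
From mathcomp Require Import ring lra.
Import Order.TTheory GRing.Theory Num.Theory.
Import numFieldNormedType.Exports.
Set Implicit Arguments. Unset Strict Implicit.
Local Open Scope classical_set_scope.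
Local Open Scope ring_scope.

Section Aux.
Variables (R : realType) (d : nat).
Implicit Types (a b : 'I_d -> R).

Definition Dot a b : R := \sum_(i < d) a i * b i.

Lemma Dot_ge0 a : 0 <= Dot a a.
Proof. by apply: sumr_ge0 => i _; rewrite -expr2 sqr_ge0. Qed.

Lemma Dot_expand a b s :
  \sum_(i < d) (a i + s * b i) ^+ 2 = Dot a a + 2 * s * Dot a b + s ^+ 2 * Dot b b.
Proof.
rewrite /Dot (eq_bigr (fun i => a i * a i + (2 * s) * (a i * b i) + s ^+ 2 * (b i * b i))).
  by rewrite !big_split /= -!mulr_sumr.
by move=> i _; ring.
Qed.

Lemma Dot_sym a b : Dot a b = Dot b a.
Proof. by apply: eq_bigr => i _; rewrite mulrC. Qed.

Lemma CS a b : Dot a b ^+ 2 <= Dot a a * Dot b b.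
Proof.
have [A0|Apos] := eqVneq (Dot b b) 0.
  have bi0 : forall i, b i = 0.
    move=> i; apply/eqP; rewrite -sqrf_eq0 expr2; apply/eqP.
    by apply: (@psumr_eq0P _ _ predT (fun i => b i * b i)) => // j _; rewrite -expr2 sqr_ge0.
  rewrite A0 mulr0 /Dot big1 ?expr0n // => i _; by rewrite bi0 mulr0.
have Ap : 0 < Dot b b by rewrite lt_neqAle eq_sym Apos Dot_ge0.
set t := - (Dot a b / Dot b b).
have := Dot_ge0 (fun i => a i + t * b i).
have -> : Dot (fun i => a i + t * b i) (fun i => a i + t * b i) =
  \sum_(i < d) (a i + t * b i) ^+ 2 by apply: eq_bigr => i _; rewrite expr2.
rewrite Dot_expand /t.
set B := Dot a b; set A := Dot b b; set C := Dot a a => h.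
have : 0 <= (C + 2 * - (B / A) * B + (- (B / A)) ^+ 2 * A) * A by rewrite mulr_ge0 // ltW.
have -> : (C + 2 * - (B / A) * B + (- (B / A)) ^+ 2 * A) * A = C * A - B ^+ 2.
  by field; rewrite Apos.
by rewrite subr_ge0 mulrC.
Qed.

Lemma sumsq_Dot a : \sum_(i < d) a i ^+ 2 = Dot a a.
Proof. by apply: eq_bigr => i _; rewrite expr2. Qed.

Lemma CSsqrt a b : Dot a b <= Num.sqrt (Dot a a) * Num.sqrt (Dot b b).
Proof.
rewrite -sqrtrM ?Dot_ge0 //; apply: le_trans (ler_norm _) _.
by rewrite -sqrtr_sqr ler_wsqrtr // CS.
Qed.

Lemma tri a b : Num.sqrt (\sum_(i < d) (a i + b i) ^+ 2) <=
  Num.sqrt (\sum_(i < d) a i ^+ 2) + Num.sqrt (\sum_(i < d) b i ^+ 2).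
Proof.
have -> : \sum_(i < d) (a i + b i) ^+ 2 = \sum_(i < d) (a i + 1 * b i) ^+ 2.
  by apply: eq_bigr => i _; rewrite mul1r.
rewrite Dot_expand !sumsq_Dot.
have hB := CSsqrt a b.
have hA := Dot_ge0 a; have hC := Dot_ge0 b.
rewrite -(ger0_norm (addr_ge0 (sqrtr_ge0 (Dot a a)) (sqrtr_ge0 (Dot b b)))) -sqrtr_sqr.
rewrite ler_wsqrtr // sqrrD !sqr_sqrtr //. lra.
Qed.
End Aux.

Section Geo.
Variables (R : realType) (d : nat).

Lemma ed_ge0 (x y : 'rV[R]_d) : 0 <= eucl_dist x y.
Proof. exact: sqrtr_ge0. Qed.

Lemma ed_sym (x y : 'rV[R]_d) : eucl_dist x y = eucl_dist y x.
Proof. by rewrite /eucl_dist; congr Num.sqrt; apply: eq_bigr => i _; rewrite -sqrrN opprB. Qed.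

Lemma ed_tri (x y z : 'rV[R]_d) : eucl_dist x y <= eucl_dist x z + eucl_dist z y.
Proof.
rewrite /eucl_dist.
have -> : \sum_(i < d) (x ord0 i - y ord0 i) ^+ 2 =
   \sum_(i < d) ((x ord0 i - z ord0 i) + (z ord0 i - y ord0 i)) ^+ 2.
  by apply: eq_bigr => i _; congr (_ ^+ 2); ring.
exact: (@tri R d (fun i => x ord0 i - z ord0 i) (fun i => z ord0 i - y ord0 i)).
Qed.

Lemma distH_le (H : set 'rV[R]_d) (x z : 'rV[R]_d) : H z -> distH x H <= eucl_dist x z.
Proof.
move=> Hz; apply: ge_inf; last by exists z.
by exists 0 => _ [y _ <-]; exact: ed_ge0.
Qed.

Lemma distH_cl (H : set 'rV[R]_d) (x z : 'rV[R]_d) : eclosure H z -> distH x H <= eucl_dist x z.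
Proof.
move=> Hz; apply/ler_addgt0Pr => e e0.
have [y Hy hzy] := Hz e e0.
apply: le_trans (distH_le x Hy) _.
apply: le_trans (ed_tri x y z) _.
by rewrite lerD2l ltW.
Qed.
End Geo.


Lemma hcont (R : realType) (A B C b : R) : 0 < b -> C = b ^+ 2 ->
  (fun s : R => (2 * B + s * A) / (Num.sqrt (C + 2 * s * B + s * s * A) + b)) @ 0 --> B / b.
Proof.
move=> b0 Cb.
have -> : B / b = (2 * B + 0 * A) / (Num.sqrt (C + 2 * 0 * B + 0 * 0 * A) + b).
  rewrite !mul0r mulr0 !mul0r !addr0 Cb sqrtr_sqr gtr0_norm //; field.
  by rewrite !lt0r_neq0 // addr_gt0.
apply: cvgM.
  apply: cvgD; first exact: cvg_cst.
  by apply: cvgM; [exact: cvg_id | exact: cvg_cst].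
apply: cvgV.
  by rewrite !(mul0r, mulr0, addr0) Cb sqrtr_sqr gtr0_norm // lt0r_neq0 // addr_gt0.
apply: cvgD; last exact: cvg_cst.
apply: (@continuous_cvg _ _ _ _ _ (fun s => C + 2 * s * B + s * s * A) Num.sqrt).
  exact: sqrt_continuous.
apply: cvgD; first apply: cvgD.
- exact: cvg_cst.
- apply: cvgM; last exact: cvg_cst.
  by apply: cvgM; [exact: cvg_cst | exact: cvg_id].
- apply: cvgM; last exact: cvg_cst.
  by apply: cvgM; exact: cvg_id.
Qed.

Unset Implicit Arguments.
Set Strict Implicit.

Theorem lemma4 (R : realType) (d : nat) (hd : (1 <= d)%N)
  (H : set 'rV[R]_d) (pi : 'rV[R]_d -> 'rV[R]_d) (r : R) (xt yt : 'rV[R]_d) :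
  H !=set0 -> is_proj H pi -> 0 < r ->
  r <= distH xt H -> r <= distH yt H ->
  let ft := fun s : R => eucl_dist (Ts H pi s xt) (Ts H pi s yt) in
  exists L : R,
    (fun s : R => (ft s - ft 0) / s) @ 0^'+ --> L /\ - L <= ft 0 / r.
Proof.
move=> _ proj r0 hx hy ft.
set Dx := distH xt H; set Dy := distH yt H.
have Dx0 : 0 < Dx by exact: lt_le_trans hx.
have Dy0 : 0 < Dy by exact: lt_le_trans hy.
set px := pi xt; set py := pi yt.
have eDx : eucl_dist px xt = Dx by rewrite ed_sym; case: (proj xt).
have eDy : eucl_dist py yt = Dy by rewrite ed_sym; case: (proj yt).
pose w := fun i : 'I_d => xt ord0 i - yt ord0 i.
pose P := fun i : 'I_d => px ord0 i - xt ord0 i.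
pose Q := fun i : 'I_d => py ord0 i - yt ord0 i.
pose v := fun i : 'I_d => P i / Dx - Q i / Dy.
set C := Dot w w; set B := Dot w v; set A := Dot v v.
have key : forall s, 0 <= s < r -> ft s = Num.sqrt (C + 2 * s * B + s * s * A).
  move=> s /andP[s0 sr].
  rewrite /ft /Ts -/Dx -/Dy -/px -/py.
  rewrite ifT; last exact: lt_le_trans hx.
  rewrite ifT; last exact: lt_le_trans hy.
  rewrite eDx eDy /eucl_dist -expr2 -Dot_expand; congr Num.sqrt.
  apply: eq_bigr => i _; rewrite !mxE /w /v /P /Q; congr (_ ^+ 2).
  by field; rewrite !lt0r_neq0.
have Qnn : forall s, 0 <= C + 2 * s * B + s * s * A.
  move=> s; have := Dot_ge0 (fun i => w i + s * v i).
  by rewrite -sumsq_Dot Dot_expand expr2.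
have hC0 : 0 <= C by exact: Dot_ge0.
have f0 : ft 0 = Num.sqrt C.
  by rewrite key ?lexx ?r0 // !(mulr0, mul0r, addr0).
have hPP : Dot P P = Dx ^+ 2.
  rewrite -sumsq_Dot -eDx /eucl_dist sqr_sqrtr //.
  by apply: sumr_ge0 => i _; exact: sqr_ge0.
have hQQ : Dot Q Q = Dy ^+ 2.
  rewrite -sumsq_Dot -eDy /eucl_dist sqr_sqrtr //.
  by apply: sumr_ge0 => i _; exact: sqr_ge0.
have hx2 : Dx ^+ 2 <= C + 2 * (-1) * Dot w Q + (-1) ^+ 2 * Dot Q Q.
  have h := distH_cl xt (proj yt).1; rewrite -/Dx -/py in h.
  have eS : \sum_(i < d) (xt ord0 i - py ord0 i) ^+ 2 =
     C + 2 * (-1) * Dot w Q + (-1) ^+ 2 * Dot Q Q.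
    by rewrite -Dot_expand; apply: eq_bigr => i _; rewrite /w /Q; ring.
  move: h; rewrite /eucl_dist eS; set S := C + _ + _ => h.
  have Sge : 0 <= S by rewrite /S -eS; apply: sumr_ge0 => i _; exact: sqr_ge0.
  have := sqr_sqrtr Sge; move: (sqrtr_ge0 S) h; set q := Num.sqrt S => q0 h e.
  rewrite -e; nra.
have hy2 : Dy ^+ 2 <= C + 2 * 1 * Dot w P + 1 ^+ 2 * Dot P P.
  have h := distH_cl yt (proj xt).1; rewrite -/Dy -/px in h.
  have eS : \sum_(i < d) (yt ord0 i - px ord0 i) ^+ 2 =
     C + 2 * 1 * Dot w P + 1 ^+ 2 * Dot P P.
    by rewrite -Dot_expand; apply: eq_bigr => i _; rewrite /w /P; ring.
  move: h; rewrite /eucl_dist eS; set S := C + _ + _ => h.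
  have Sge : 0 <= S by rewrite /S -eS; apply: sumr_ge0 => i _; exact: sqr_ge0.
  have := sqr_sqrtr Sge; move: (sqrtr_ge0 S) h; set q := Num.sqrt S => q0 h e.
  rewrite -e; nra.
have hB : B = Dot w P / Dx - Dot w Q / Dy.
  by rewrite /B /Dot !mulr_suml -sumrB; apply: eq_bigr => i _; rewrite /v; ring.
have hmain : - B <= C / r.
  rewrite hB hQQ hPP in hx2 hy2 *.
  move: hx2 hy2; rewrite sqrrN !expr1n !mul1r.
  set al := Dot w P; set be := Dot w Q => hx2 hy2.
  set t := Dy^-1; set u := Dx^-1.
  have t0 : 0 < t by rewrite invr_gt0.
  have u0 : 0 < u by rewrite invr_gt0.
  have s1 : be * t <= ((C + Dy ^+ 2 - Dx ^+ 2) / 2) * t.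
    by rewrite ler_pM2r //; lra.
  have s2 : - al * u <= ((C + Dx ^+ 2 - Dy ^+ 2) / 2) * u.
    by rewrite ler_pM2r //; lra.
  have s3 : ((C + Dy ^+ 2 - Dx ^+ 2) / 2) * t + ((C + Dx ^+ 2 - Dy ^+ 2) / 2) * u
      = C * (t + u) / 2 - (Dy - Dx) ^+ 2 * (Dy + Dx) * t * u / 2.
    by rewrite /t /u; field; rewrite !lt0r_neq0.
  have s4 : 0 <= (Dy - Dx) ^+ 2 * (Dy + Dx) * t * u / 2.
    apply: mulr_ge0; last by rewrite invr_ge0 ler0n.
    apply: mulr_ge0; last exact: ltW.
    apply: mulr_ge0; last exact: ltW.
    by apply: mulr_ge0; [exact: sqr_ge0 | exact: ltW (addr_gt0 Dy0 Dx0)].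
  have ht : t <= r^-1 by rewrite /t lef_pV2 ?posrE.
  have hu : u <= r^-1 by rewrite /u lef_pV2 ?posrE.
  have s5 : C * (t + u) / 2 <= C / r.
    have -> : C / r = C * (r^-1 + r^-1) / 2 by field; rewrite lt0r_neq0.
    by rewrite ler_wpM2r // ler_wpM2l // lerD.
  have -> : - (al * u - be * t) = be * t + - al * u by ring.
  apply: le_trans (lerD s1 s2) _; rewrite s3.
  apply: le_trans s5; rewrite lerBlDr lerDl //.
have [C0|Cn0] := eqVneq C 0.
  have B0 : B = 0.
    apply/eqP; rewrite -sqrf_eq0 eq_le sqr_ge0 andbT.
    by apply: le_trans (CS w v) _; rewrite -/C -/B -/A C0 mul0r.
  exists (Num.sqrt A); split; last first.
    by rewrite f0 C0 sqrtr0 mul0r oppr_le0 sqrtr_ge0.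
  have hc : (fun _ : R => Num.sqrt A) @ 0^'+ --> Num.sqrt A by apply: cvg_cst.
  apply: (cvg_trans _ hc); apply: near_eq_cvg; near=> s.
  have s0 : 0 < s by near: s; exact: nbhs_right_gt.
  have sr : s < r by near: s; exact: nbhs_right_lt.
  rewrite key ?sr ?ltW // f0 C0 B0 !(mulr0, add0r, addr0) sqrtr0 subr0.
  rewrite sqrtrM ?mulr_ge0 ?ltW // -expr2 sqrtr_sqr gtr0_norm //.
  by rewrite mulrC mulKf // lt0r_neq0.
have Cpos : 0 < C by rewrite lt_neqAle eq_sym Cn0 hC0.
set b := Num.sqrt C.
have b0 : 0 < b by rewrite sqrtr_gt0.
have Cb : C = b ^+ 2 by rewrite sqr_sqrtr.
exists (B / b); split; last first.
  rewrite f0 -/b.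
  have e : b / r + B / b = (C / r + B) / b by rewrite Cb; field; rewrite !lt0r_neq0.
  have : 0 <= (C / r + B) / b.
    by apply: divr_ge0; [move: hmain; rewrite -subr_ge0 opprK | exact: ltW].
  rewrite -e; lra.
have hc := cvg_at_right_filter (@hcont R A B C b b0 Cb).
apply: (cvg_trans _ hc); apply: near_eq_cvg; near=> s.
have s0 : 0 < s by near: s; exact: nbhs_right_gt.
have sr : s < r by near: s; exact: nbhs_right_lt.
rewrite key ?sr ?ltW // f0 -/b.
have a2 := sqr_sqrtr (Qnn s).
move: a2 (sqrtr_ge0 (C + 2 * s * B + s * s * A)).
set a := Num.sqrt _ => a2 a0.
have e : (a - b) * (a + b) = s * (2 * B + s * A).
  have -> : (a - b) * (a + b) = a ^+ 2 - b ^+ 2 by ring.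
  by rewrite a2 -Cb; ring.
have ab : 0 < a + b by lra.
apply/eqP; rewrite eqr_div ?lt0r_neq0 //.
by rewrite mulrC e mulrC.
Unshelve. all: by end_near.
Qed.
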